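(* Let $(Y,\cdot)$ be a strong order-preserving partial action of a monoid $T$ on a semilattice $Y$. Then there is a globalisation $(\kappa,\mathcal{X},\bullet)$ of $(Y,\cdot)$ such that $\mathcal{X}$ is a semilattice with identity, $\kappa:Y\to\mathcal{X}$ is an (injective) semilattice morphism, and $(\mathcal{X},\bullet)$ is an order-preserving action of $T$.
   Context: A semilattice is a commutative semigroup of idempotents, viewed as a poset via $e\le f$ iff $ef=e$. A partial action of a monoid $T$ on a set $X$ is a partial map $T\times X\to X$, $(t,x)\mapsto t\cdot x$, such that $1\cdot x$ is defined and equals $x$, and whenever $t\cdot x$ and $s\cdot(t\cdot x)$ are defined, $st\cdot x$ is defined and equals $s\cdot(t\cdot x)$. It is an action if always defined; strong if whenever $t\cdot x$ and $st\cdot x$ are defined then $s\cdot(t\cdot x)$ is defined; order-preserving (on a poset) if whenever $x\le y$ and $t\cdot y$ is defined then $t\cdot x$ is defined and $t\cdot x\le t\cdot y$. A globalisation of $(X,\cdot)$ is a triple $(\iota,\mathbf{X},\ast)$ with $\iota:X\to\mathbf{X}$ injective and $(\mathbf{X},\ast)$ an action of $T$ such that $t\cdot x$ is defined iff $t\ast x\iota\in X\iota$, and then $(t\cdot x)\iota=t\ast x\iota$. *)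

(* Defs.v *)
Definition is_monoid {T : Type} (mul : T -> T -> T) (one : T) : Prop :=
  (forall a b c, mul a (mul b c) = mul (mul a b) c) /\
  (forall a, mul one a = a) /\ (forall a, mul a one = a).

Definition is_semilattice {Y : Type} (m : Y -> Y -> Y) : Prop :=
  (forall a b c, m a (m b c) = m (m a b) c) /\
  (forall a b, m a b = m b a) /\ (forall a, m a a = a).

Definition sl_le {Y : Type} (m : Y -> Y -> Y) (e f : Y) : Prop := m e f = e.

Definition is_semilattice_with_identity {X : Type} (m : X -> X -> X) (u : X) : Prop :=
  is_semilattice m /\ (forall a, m u a = a) /\ (forall a, m a u = a).

Definition is_semilattice_morphism {Y X : Type} (mY : Y -> Y -> Y) (mX : X -> X -> X)
  (k : Y -> X) : Prop := forall a b, k (mY a b) = mX (k a) (k b).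

(* Partial action of T on Y: act t x = Some y means t.x is defined and equals y. *)
Definition is_partial_action {T Y : Type} (mul : T -> T -> T) (one : T)
  (act : T -> Y -> option Y) : Prop :=
  (forall x, act one x = Some x) /\
  (forall s t x y z, act t x = Some y -> act s y = Some z -> act (mul s t) x = Some z).

Definition is_strong {T Y : Type} (mul : T -> T -> T) (act : T -> Y -> option Y) : Prop :=
  forall s t x y w, act t x = Some y -> act (mul s t) x = Some w ->
    exists z, act s y = Some z.

Definition is_order_preserving_partial {T Y : Type} (le : Y -> Y -> Prop)
  (act : T -> Y -> option Y) : Prop :=
  forall t x y y', le x y -> act t y = Some y' ->
    exists x', act t x = Some x' /\ le x' y'.

Definition is_action {T X : Type} (mul : T -> T -> T) (one : T) (act : T -> X -> X) : Prop :=
  (forall x, act one x = x) /\ (forall s t x, act (mul s t) x = act s (act t x)).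

Definition is_order_preserving_action {T X : Type} (le : X -> X -> Prop)
  (act : T -> X -> X) : Prop :=
  forall t x y, le x y -> le (act t x) (act t y).

Definition is_globalisation {T Y X : Type} (mul : T -> T -> T) (one : T)
  (act : T -> Y -> option Y) (iota : Y -> X) (gact : T -> X -> X) : Prop :=
  (forall a b, iota a = iota b -> a = b) /\
  is_action mul one gact /\
  (forall t x, (exists y, act t x = Some y) <-> (exists z, gact t (iota x) = iota z)) /\
  (forall t x y, act t x = Some y -> gact t (iota x) = iota y).

(* Main.v *)
Require Import Defs.
From Stdlib Require Import Relations ProofIrrelevance FunctionalExtensionality PropExtensionality.

Inductive gen {T Y : Type} (mul : T -> T -> T) (le : Y -> Y -> Prop)
  (act : T -> Y -> option Y) : (T * Y) -> (T * Y) -> Prop :=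
| g1 : forall u w x, le w x -> gen mul le act (u, w) (u, x)
| g2 : forall u t x y, act t x = Some y -> gen mul le act (mul u t, x) (u, y)
| g3 : forall u t x y, act t x = Some y -> gen mul le act (u, y) (mul u t, x).

Definition below {T Y : Type} (mul : T -> T -> T) (le : Y -> Y -> Prop)
  (act : T -> Y -> option Y) := clos_refl_trans _ (gen mul le act).

Definition Qk {T Y : Type} (mY : Y -> Y -> Y) (act : T -> Y -> option Y) (a : Y)
  (p : T * Y) : Prop := exists z, act (fst p) (snd p) = Some z /\ sl_le mY z a.

Lemma sl_trans {Y} (m : Y -> Y -> Y) : is_semilattice m ->
  forall x y z, sl_le m x y -> sl_le m y z -> sl_le m x z.
Proof.
  intros [A [C I]] x y z H1 H2; unfold sl_le in *.
  rewrite <- H1, <- A, H2; reflexivity.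
Qed.

Lemma sl_meet {Y} (m : Y -> Y -> Y) : is_semilattice m ->
  forall z a b, sl_le m z (m a b) <-> sl_le m z a /\ sl_le m z b.
Proof.
  intros hY z a b; pose proof hY as [A [C I]]; split.
  - intros H; split; eapply sl_trans; eauto; unfold sl_le.
    + rewrite (C (m a b) a), A, I. reflexivity.
    + rewrite <- A, I. reflexivity.
  - unfold sl_le; intros [H1 H2]. rewrite A, H1, H2. reflexivity.
Qed.

Lemma monoL {T Y : Type} (mul : T -> T -> T) (le : Y -> Y -> Prop)
  (act : T -> Y -> option Y) :
  (forall a b c, mul a (mul b c) = mul (mul a b) c) ->
  forall s q p, below mul le act q p ->
    below mul le act (mul s (fst q), snd q) (mul s (fst p), snd p).
Proof.
  intros A s q p H; induction H.
  - destruct H; simpl; apply rt_step.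
    + apply g1; auto.
    + rewrite A; apply g2; auto.
    + rewrite A; apply g3; auto.
  - apply rt_refl.
  - eapply rt_trans; eauto.
Qed.

Lemma down_Q {T Y : Type} (mul : T -> T -> T) (one : T) (mY : Y -> Y -> Y)
  (act : T -> Y -> option Y) :
  is_semilattice mY -> is_partial_action mul one act -> is_strong mul act ->
  is_order_preserving_partial (sl_le mY) act ->
  forall q p, below mul (sl_le mY) act q p -> forall a, Qk mY act a p -> Qk mY act a q.
Proof.
  intros hY [h1 h2] hs hop q p H; induction H; intros a Hq; auto.
  destruct H; unfold Qk in *; simpl in *; destruct Hq as [z [Hz Hle]].
  - destruct (hop u w x z H Hz) as [z' [Hz' Hl']].
    exists z'; split; auto. eapply sl_trans; eauto.
  - exists z; split; auto. eapply h2; eauto.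
  - destruct (hs u t x y z H Hz) as [z' Hz'].
    pose proof (h2 _ _ _ _ _ H Hz') as E. rewrite Hz in E. injection E; intros ->.
    exists z'; auto.
Qed.

Lemma Q_below {T Y : Type} (mul : T -> T -> T) (one : T) (mY : Y -> Y -> Y)
  (act : T -> Y -> option Y) :
  is_monoid mul one ->
  forall a q, Qk mY act a q -> below mul (sl_le mY) act q (one, a).
Proof.
  intros [A [L R]] a [v w] [z [Hz Hle]]; simpl in *.
  eapply rt_trans.
  - pose proof (g2 mul (sl_le mY) act one v w z Hz) as G. rewrite L in G. apply rt_step; exact G.
  - apply rt_step; apply g1; auto.
Qed.

Lemma pred_eq {A : Type} (P Q : A -> Prop) : (forall x, P x <-> Q x) -> P = Q.
Proof. intros H; extensionality x; apply propositional_extensionality; auto. Qed.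

Theorem mainTheorem5 (T : Type) (mul : T -> T -> T) (one : T)
  (Y : Type) (mY : Y -> Y -> Y) (act : T -> Y -> option Y)
  (hT : is_monoid mul one) (hY : is_semilattice mY)
  (hpa : is_partial_action mul one act) (hstrong : is_strong mul act)
  (hop : is_order_preserving_partial (sl_le mY) act) :
  exists (X : Type) (mX : X -> X -> X) (uX : X) (kappa : Y -> X) (gact : T -> X -> X),
    is_globalisation mul one act kappa gact /\
    is_semilattice_with_identity mX uX /\
    is_semilattice_morphism mY mX kappa /\
    is_order_preserving_action (sl_le mX) gact.
Proof.
  set (le' := below mul (sl_le mY) act).
  set (X := { A : T * Y -> Prop | forall p q, le' q p -> A p -> A q }).
  assert (Xeq : forall A B : X, (forall p, proj1_sig A p <-> proj1_sig B p) -> A = B).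
  { intros [A HA] [B HB] H; simpl in H. apply pred_eq in H. subst B.
    f_equal; apply proof_irrelevance. }
  pose proof hT as [hA [hL hR]].
  pose proof hY as [yA [yC yI]].
  pose proof hpa as [p1 p2].
  assert (hle : forall a, sl_le mY a a) by (intro; apply yI).
  assert (Kd : forall a p q, le' q p -> Qk mY act a p -> Qk mY act a q).
  { intros; eapply down_Q; eauto. }
  set (kappa := fun a : Y => exist (fun A : T * Y -> Prop => forall p q, le' q p -> A p -> A q) (Qk mY act a) (fun p q H => Kd a p q H) : X).
  assert (Gd : forall t (A : X) p q, le' q p ->
     (exists r, proj1_sig A r /\ le' p (mul t (fst r), snd r)) ->
     (exists r, proj1_sig A r /\ le' q (mul t (fst r), snd r))).
  { intros t A p q H [r [H1 H2]]; exists r; split; auto. eapply rt_trans; eauto. }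
  set (gact := fun t (A : X) =>
     exist (fun A : T * Y -> Prop => forall p q, le' q p -> A p -> A q) (fun q => exists r, proj1_sig A r /\ le' q (mul t (fst r), snd r))
       (fun p q H => Gd t A p q H) : X).
  set (mX := fun A B : X => exist (fun A : T * Y -> Prop => forall p q, le' q p -> A p -> A q) (fun p => proj1_sig A p /\ proj1_sig B p)
       (fun p q H (h : proj1_sig A p /\ proj1_sig B p) =>
          conj (proj2_sig A p q H (proj1 h)) (proj2_sig B p q H (proj2 h))) : X).
  set (uX := exist (fun A : T * Y -> Prop => forall p q, le' q p -> A p -> A q) (fun _ => True) (fun _ _ _ _ => I) : X).
  assert (Kchar : forall a q, Qk mY act a q <-> le' q (one, a)).
  { intros a q; split.
    - apply Q_below; auto.
    - intros H. eapply Kd; eauto. exists a; simpl; split; auto. }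
  assert (Gchar : forall t x q, proj1_sig (gact t (kappa x)) q <-> le' q (t, x)).
  { intros t x q; simpl; split.
    - intros [r [H1 H2]]. apply Kchar in H1.
      eapply rt_trans; [exact H2|].
      pose proof (monoL mul (sl_le mY) act hA t _ _ H1) as M. simpl in M.
      rewrite hR in M; exact M.
    - intros H. exists (one, x); split.
      + exists x; simpl; split; auto.
      + simpl; rewrite hR; exact H. }
  assert (Key : forall t x y, act t x = Some y -> gact t (kappa x) = kappa y).
  { intros t x y Hy. apply Xeq; intros q. rewrite Gchar.
    change (proj1_sig (kappa y) q) with (Qk mY act y q). rewrite Kchar.
    split; intros H; eapply rt_trans; try exact H; apply rt_step.
    - pose proof (g2 mul (sl_le mY) act one t x y Hy) as G; rewrite hL in G; exact G.
    - pose proof (g3 mul (sl_le mY) act one t x y Hy) as G; rewrite hL in G; exact G. }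
  exists X, mX, uX, kappa, gact.
  split; [|split; [|split]].
  - split; [|split; [|split]].
    + intros a b E.
      assert (Ha : proj1_sig (kappa a) (one, a)) by (exists a; simpl; split; auto).
      assert (Hb : proj1_sig (kappa b) (one, b)) by (exists b; simpl; split; auto).
      rewrite E in Ha. rewrite <- E in Hb.
      destruct Ha as [z [Hz Hl]]; destruct Hb as [z' [Hz' Hl']]; simpl in *.
      rewrite p1 in Hz, Hz'. injection Hz; injection Hz'; intros <- <-.
      unfold sl_le in *. rewrite <- Hl at 1. rewrite yC; exact Hl'.
    + split.
      * intros A. apply Xeq; intros q; simpl; split.
        -- intros [r [H1 H2]]. rewrite hL in H2. destruct r. eapply (proj2_sig A); eauto.
        -- intros H. exists q; split; auto. rewrite hL; destruct q; apply rt_refl.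
      * intros s t A. apply Xeq; intros q; simpl; split.
        -- intros [r [H1 H2]]. exists (mul t (fst r), snd r); split.
           ++ exists r; split; auto. apply rt_refl.
           ++ simpl; rewrite hA; exact H2.
        -- intros [r [[r' [H1 H2]] H3]]. exists r'; split; auto.
           eapply rt_trans; [exact H3|].
           pose proof (monoL mul (sl_le mY) act hA s _ _ H2) as M; simpl in M.
           rewrite hA in M; exact M.
    + intros t x; split.
      * intros [y Hy]. exists y; auto.
      * intros [z Hz]. assert (H : proj1_sig (gact t (kappa x)) (t, x)).
        { apply Gchar; apply rt_refl. }
        rewrite Hz in H. destruct H as [z' [Hz' _]]. exists z'; exact Hz'.
    + exact Key.
  - split; [split; [|split]|split].
    + intros A B C; apply Xeq; intros q; simpl; tauto.
    + intros A B; apply Xeq; intros q; simpl; tauto.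
    + intros A; apply Xeq; intros q; simpl; tauto.
    + intros A; apply Xeq; intros q; simpl; tauto.
    + intros A; apply Xeq; intros q; simpl; tauto.
  - intros a b; apply Xeq; intros q; simpl. unfold Qk.
    split.
    + intros [z [Hz Hl]]. apply sl_meet in Hl; auto. destruct Hl.
      split; exists z; auto.
    + intros [[z [Hz Hl]] [z' [Hz' Hl']]]. rewrite Hz in Hz'. injection Hz'; intros <-.
      exists z; split; auto. apply sl_meet; auto.
  - intros t A B H. unfold sl_le in *.
    assert (Hs : forall p, proj1_sig A p -> proj1_sig B p).
    { intros p Hp. rewrite <- H in Hp. exact (proj2 Hp). }
    apply Xeq; intros q; simpl; split.
    + tauto.
    + intros [r [H1 H2]]. split; exists r; auto.
Qed.
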